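(* Let $S$ be a numerical semigroup with minimal generators $a_1<a_2<\cdots<a_\nu$ ($\nu\ge2$), multiplicity $\mu=a_1$ and conductor $c$, and suppose $a_2>\frac{c+\mu}{3}$. Let $P=\{a_1,\dots,a_\nu\}$, $q_1=|\{a\in P\setminus\{\mu\}: \tfrac13(c+\mu)<a<\tfrac12(c+\mu)\}|$ and $q_2=|\{a\in P\setminus\{\mu\}: \tfrac12(c+\mu)\le a<\tfrac23(c+\mu)\}|$. Then: (a) $\mu\le \nu+\frac{q_1(q_1+1)}{2}+q_1q_2$; (b) $\mu\le\frac12\nu(\nu+1)$; (c) $q_1\ge \frac{2\nu-1-\sqrt{(2\nu+1)^2-8\mu}}{2}$.
   Context: A numerical semigroup is a submonoid $S\subseteq\mathbb{N}$ with finite complement. The minimal generating set has cardinality $\nu$ (embedding dimension); its smallest element $\mu$ is the multiplicity. The conductor $c$ is the least integer with $c+\mathbb{N}\subseteq S$. *)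

(* Defs.v *)
From mathcomp Require Import all_boot all_order all_algebra.
Set Implicit Arguments. Unset Strict Implicit. Unset Printing Implicit Defensive.

Definition numerical_semigroup (S : pred nat) : Prop :=
  [/\ S 0,
      (forall x y, S x -> S y -> S (x + y)) &
      exists N, forall n, N <= n -> S n].

Definition min_gen (S : pred nat) (a : nat) : Prop :=
  [/\ S a, 0 < a &
      ~ exists x y, [/\ S x, S y, 0 < x, 0 < y & x + y = a]].

Definition min_gens_seq (S : pred nat) (gens : seq nat) : Prop :=
  sorted ltn gens /\ (forall a, a \in gens <-> min_gen S a).

Definition is_conductor (S : pred nat) (c : nat) : Prop :=
  (forall n, c <= n -> S n) /\
  (forall c', (forall n, c' <= n -> S n) -> c <= c').

(* Main.v *)
Require Import Defs.
From mathcomp Require Import all_boot all_order all_algebra.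
Import Order.TTheory GRing.Theory Num.Theory.
From mathcomp Require Import zify ring lra.
From Stdlib Require Import Classical.

Lemma exists_gen (S : pred nat) x : S 0 -> (forall x y, S x -> S y -> S (x+y)) ->
  S x -> 0 < x -> exists g, [/\ min_gen S g, g <= x & S (x - g)].
Proof.
move=> S0 Sadd; elim: x {-2}x (leqnn x) => [|n IH] x hx Sx x0.
  by move: hx x0; rewrite leqn0 => /eqP->.
case: (classic (min_gen S x)) => [hg|hng].
  by exists x; rewrite subnn; split.

have [y [z [Sy Sz y0 z0 e]]] : exists y z, [/\ S y, S z, 0<y, 0<z & y+z = x].
  apply: NNPP => hne; apply: hng; by split.
have [g [gg gy Syg]] := IH y ltac:(lia) Sy y0.
exists g; split => //; first lia.
have -> : x - g = (y - g) + z by lia.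
exact: Sadd.
Qed.

Lemma apery_shape (S : pred nat) m K (gs : seq nat) x : S 0 ->
  (forall x y, S x -> S y -> S (x+y)) ->
  (forall g, min_gen S g -> g != m -> g \in gs) ->
  (forall g, g \in gs -> K < 3*g) ->
  S x -> 0 < x -> x < K -> ~~ ((m <= x) && S (x - m)) ->
  x \in gs \/ exists g h, [/\ g \in gs, h \in gs & x = g + h].
Proof.
move=> S0 Sadd hgs hbig Sx x0 xK hap.
have [g [[Sg g0 ng] gx Sxg]] := @exists_gen S _ S0 Sadd Sx x0.
have gm : g != m.
  apply/negP => /eqP egm; subst g; by rewrite gx Sxg in hap.
have ggs := hgs g ltac:(by split) gm.
have := hbig g ggs => bg.
case: (posnP (x - g)) => [y0|ypos].
  by left; have -> : x = g by lia.
have [h [[Sh h0 nh] hy Syh]] := @exists_gen S _ S0 Sadd Sxg ypos.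
have hm : h != m.
  apply/negP => /eqP ehm; subst h; move/negP: hap; apply; apply/andP; split; first lia.
  have -> : x - m = (x - g - m) + g by lia.
  exact: Sadd.
have hgs' := hgs h ltac:(by split) hm.
have := hbig h hgs' => bh.
case: (posnP (x - g - h)) => [z0|zpos].
  by right; exists g, h; split => //; lia.
have [k [[Sk k0 nk] kz Szk]] := @exists_gen S _ S0 Sadd Syh zpos.
have km : k != m.
  apply/negP => /eqP ekm; subst k; move/negP: hap; apply; apply/andP; split; first lia.
  have -> : x - m = (x - g - h - m) + (g + h) by lia.
  by apply: (Sadd) => //; apply: (Sadd).
have := hbig k (hgs k ltac:(by split) km) => bk.
lia.
Qed.

Fixpoint pairsR (s : seq nat) : seq nat :=
  if s is a :: s' then [seq a + b | b <- s] ++ pairsR s' else [::].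

Lemma size_pairsR s : 2 * size (pairsR s) = size s * (size s).+1.
Proof. elim: s => [|a s IH] //=; rewrite size_cat size_map /=; nia. Qed.

Lemma mem_pairsR s a b : a \in s -> b \in s -> a + b \in pairsR s.
Proof.
elim: s => [|x s IH] // ha hb.
change (a + b \in [seq x + b0 | b0 <- x :: s] ++ pairsR s); rewrite mem_cat; apply/orP.
case/predU1P: ha => [->|ha]; case/predU1P: hb => [->|hb].
- by left; apply/mapP; exists x; rewrite ?mem_head.
- by left; apply/mapP; exists b => //; rewrite in_cons; apply/orP; right; exact: hb.
- by left; apply/mapP; exists a; [rewrite in_cons; apply/orP; right; exact: ha | rewrite addnC].
- by right; apply: IH.
Qed.
Lemma main_nat (S : pred nat) m gs c : S 0 -> (forall x y, S x -> S y -> S (x+y)) ->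
  (forall a, a \in m :: gs <-> min_gen S a) -> path ltn m gs ->
  (forall n, c <= n -> S n) -> c + m < 3 * nth 0 gs 0 ->
  2 * m <= 2 + 2 * size gs
     + count (fun a => (c + m < 3 * a) && (2 * a < c + m)) gs
       * (count (fun a => (c + m < 3 * a) && (2 * a < c + m)) gs + 1)
     + 2 * (count (fun a => (c + m < 3 * a) && (2 * a < c + m)) gs
       * count (fun a => (c + m <= 2 * a) && (3 * a < 2 * (c + m))) gs).
Proof.
move=> S0 Sadd hgen hpath hcond ha2.
set p1 := (fun a => _ && _); set p2 := (fun a => _ && _).
have [Sm m0 _] : min_gen S m by apply/hgen; rewrite mem_head.
have hbig : forall g, g \in gs -> c + m < 3 * g.
  move: hpath ha2; clear hgen; case: gs => [|a2 rest] //= /andP[_ hp] ha2 g.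
  rewrite in_cons => /predU1P[->//|hg].
  have := order_path_min ltn_trans hp => /allP /(_ g hg) lt; lia.
have hgs : forall g, min_gen S g -> g != m -> g \in gs.
  by move=> g /hgen; rewrite in_cons => /predU1P[->|]; [rewrite eqxx|].
set X := [seq x <- iota 0 (c + m) | S x && ~~ ((m <= x) && S (x - m))].
set A := filter p1 gs; set B := filter p2 gs.
set L := gs ++ pairsR A ++ [seq a + b | a <- A, b <- B].
have hcov : {subset iota 0 m <= map (modn^~ m) X}.
  move=> r; rewrite mem_iota add0n => /andP[_ rm].
  have exP : exists y, S y && (y %% m == r).
    exists (c * m + r); rewrite hcond; last by nia.
    by rewrite modnMDl (modn_small rm) eqxx.
  case: (ex_minnP exP) => w /andP[Sw /eqP wr] wmin.
  have hmod : m <= w -> (w - m) %% m = w %% m.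
    by move=> hmw; rewrite -{2}(subnK hmw) modnDr.
  rewrite -wr; apply: map_f; rewrite mem_filter Sw mem_iota /=.
  apply/andP; split.
    apply/negP => /andP[hmw Swm].
    have := wmin (w - m); rewrite Swm hmod // wr eqxx => /(_ isT); lia.
  case: (ltnP w (c + m)) => // hw.
  have := wmin (w - m); rewrite hcond ?hmod ?wr ?eqxx; [move=> /(_ isT); lia|lia|lia].
have h1 : m <= size X.
  rewrite -(size_map (modn^~ m)) -{1}(size_iota 0 m).
  by apply: uniq_leq_size; first exact: iota_uniq.
have hsub : {subset X <= 0 :: L}.
  move=> x; rewrite mem_filter mem_iota /= => /andP[/andP[Sx hap] xK].
  case: (posnP x) => [->|x0]; first exact: mem_head.
  rewrite in_cons; apply/orP; right.
  case: (@apery_shape S m (c+m) gs x S0 Sadd hgs hbig Sx x0 xK hap) => [xg|[g [h [gg hg ex]]]].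
    by rewrite mem_cat xg.
  rewrite !mem_cat; apply/orP; right; apply/orP.
  have bg := hbig g gg; have bh := hbig h hg.
  case: (ltnP (2 * g) (c + m)) => g2.
    have gA : g \in A by rewrite mem_filter /p1 bg g2 gg.
    case: (ltnP (2 * h) (c + m)) => h2.
      have hA : h \in A by rewrite mem_filter /p1 bh h2 hg.
      by left; rewrite ex; apply: mem_pairsR.
    have hB : h \in B by rewrite mem_filter /p2 h2 hg /=; lia.
    by right; rewrite ex; apply/allpairsP; exists (g, h).
  have hA : h \in A by rewrite mem_filter /p1 bh hg /=; lia.
  have gB : g \in B by rewrite mem_filter /p2 g2 gg /=; lia.
  by right; rewrite ex addnC; apply/allpairsP; exists (h, g).
have h2 : size X <= size (0 :: L).
  by apply: uniq_leq_size => //; apply: filter_uniq; apply: iota_uniq.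
clearbody X; move: h2; rewrite /= /L !size_cat size_allpairs /A /B !size_filter.
have := size_pairsR (filter p1 gs); rewrite size_filter.
nia.
Qed.

Theorem proposition2p2 (R : rcfType) (S : pred nat) (gens : seq nat) (c : nat) :
  numerical_semigroup S ->
  min_gens_seq S gens ->
  is_conductor S c ->
  2 <= size gens ->
  (* a_2 > (c + mu)/3, with mu = a_1 *)
  c + nth 0 gens 0 < 3 * nth 0 gens 1 ->
  let nu := size gens in
  let mu := nth 0 gens 0 in
  (* P \ {mu} = behead gens *)
  let q1 := count (fun a => (c + mu < 3 * a) && (2 * a < c + mu)) (behead gens) in
  let q2 := count (fun a => (c + mu <= 2 * a) && (3 * a < 2 * (c + mu))) (behead gens) in
  [/\ (mu%:R <= nu%:R + (q1 * (q1 + 1))%:R / 2 + (q1 * q2)%:R :> R)%R,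
      (mu%:R <= (nu * (nu + 1))%:R / 2 :> R)%R &
      ((2 * nu%:R - 1 - Num.sqrt ((2 * nu%:R + 1) ^+ 2 - 8 * mu%:R)) / 2
         <= q1%:R :> R)%R].
Proof.
move=> [S0 Sadd _] [hsort hgen] [hcond _].
case: gens hsort hgen => [|m gs] // hsort hgen hsize ha2 nu mu q1 q2.
rewrite /nu /mu /q1 /q2 /=.
have hn := @main_nat S m gs c S0 Sadd hgen hsort hcond ha2.
set p1 := (fun a => _ && _) in hn *; set p2 := (fun a => _ && _) in hn *.
have hd : count p1 gs + count p2 gs <= size gs.
  rewrite -count_predUI (@eq_count _ (predI p1 p2) pred0) ?count_pred0 ?addn0.
    exact: count_size.
  move=> a /=; apply/negbTE/negP => /andP[/andP[_ h1] /andP[h2 _]]; lia.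
move: hn hd; generalize (count p1 gs) (count p2 gs) => a b hn hd.
have [n en] : exists n, size gs = n by exists (size gs).
rewrite en in hn hd *.
have hA : (2 * m + a * a + a <= 2 * n.+1 + 2 * a * n.+1)%N by nia.
have hB : (2 * m <= n.+1 * (n.+1 + 1))%N by nia.
have hn' : ((2 * m)%:R <= (2 + 2 * n + a * (a + 1) + 2 * (a * b))%:R :> R)%R by rewrite ler_nat.
have hA' : ((2 * m + a * a + a)%:R <= (2 * n.+1 + 2 * a * n.+1)%:R :> R)%R by rewrite ler_nat.
have hB' : ((2 * m)%:R <= (n.+1 * (n.+1 + 1))%:R :> R)%R by rewrite ler_nat.
rewrite !natrD !natrM in hn' hA' hB'.
split.
- rewrite !natrM !natrD -addn1 natrD. lra.
- rewrite natrM; lra.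
- set v := ((n.+1)%:R : R)%R.
  set D := ((2 * v + 1) ^+ 2 - 8 * (m%:R : R))%R.
  set x := (2 * a%:R - 2 * v + 1 : R)%R.
  have hx : (x ^+ 2 <= D)%R.
    rewrite /x /D /v; rewrite -addn1 natrD in hA' *. nra.
  have : (`|x| <= Num.sqrt D)%R.
    rewrite -sqrtr_sqr ler_sqrt //; apply: le_trans hx; exact: sqr_ge0.
  move=> hs.
  have : (- x <= `|x|)%R by rewrite -normrN ler_norm.
  rewrite /x; lra.
Qed.
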